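(* Fix integers $m\ge d\ge 1$ and put $\lambda=d/m$. Let $p$ and $q$ be monic polynomials of degree $d$ all of whose roots are real and nonnegative. Then \[ \mathcal{R}^{d,\lambda}_{\mathbb{S}[p \boxplus_{d,\lambda} q]}(s) = \mathcal{R}^{d,\lambda}_{\mathbb{S}p}(s) +\mathcal{R}^{d,\lambda}_{\mathbb{S}q}(s). \]
   Context: Rectangular finite convolution: for $p(x)=\sum_{i=0}^d(-1)^i a_i x^{d-i}$ and $q(x)=\sum_{i=0}^d(-1)^i b_i x^{d-i}$ define \[ (p\boxplus_{d,\lambda} q)(x)=\sum_{k=0}^d x^{d-k}(-1)^k\sum_{i+j=k}\frac{(d-i)!(d-j)!}{d!(d-k)!}\,\frac{(m-i)!(m-j)!}{m!(m-k)!}\,a_ib_j . \] (When $p=\det(xI_d-A^TA)$, $q=\det(xI_d-B^TB)$ for real $m\times d$ matrices $A,B$, this equals the average of $\det(xI_d-(A+QBR)^T(A+QBR))$ over Haar-distributed $Q\in\mathcal O_m$, $R\in\mathcal O_d$.) For a polynomial $p$ with nonnegative roots, $\mathbb{S}p(x):=p(x^2)$ is its symmetrization. Finite rectangular $R$-transform: for monic $p(x)=\sum_{i=0}^d(-1)^ip_ix^{d-i}$ with nonnegative roots, set \[ E_p(s):=\sum_{i=0}^d (-1)^i (md)^i\frac{(m-i)!(d-i)!}{m!\,d!}\,p_i\,s^i , \] and let $\mathcal{R}^{d,\lambda}_{\mathbb{S}p}(s)$ be the unique polynomial of degree at most $d$ such that $\mathcal{R}^{d,\lambda}_{\mathbb{S}p}(s)\equiv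 -\frac{s}{d}\frac{d}{ds}\log E_p(s)$ modulo $s^{d+1}$ (i.e. the coefficients of $s^0,\dots,s^d$ agree, as formal power series). *)

(* Defs.v *)
From HB Require Import structures.
From mathcomp Require Import all_boot all_order all_algebra.
Set Implicit Arguments. Unset Strict Implicit. Unset Printing Implicit Defensive.
Import Order.TTheory GRing.Theory Num.Theory.
Local Open Scope ring_scope.

Section RectConv.
Variable R : realFieldType.

(* For p(x) = \sum_i (-1)^i a_i x^(d-i), the coefficient a_i. *)
Definition acoef (d : nat) (p : {poly R}) (i : nat) : R :=
  (-1) ^+ i * p`_(d - i).

Definition convCoef (m d i j k : nat) : R :=
  ((d - i)`!%:R * (d - j)`!%:R / ((d`!)%:R * (d - k)`!%:R)) *
  ((m - i)`!%:R * (m - j)`!%:R / ((m`!)%:R * (m - k)`!%:R)).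

Definition rconv (m d : nat) (p q : {poly R}) : {poly R} :=
  \sum_(k < d.+1) ('X^(d - k) *
     ((-1) ^+ k * \sum_(i < k.+1)
        convCoef m d i (k - i) k * acoef d p i * acoef d q (k - i))%:P).

Definition Epoly (m d : nat) (p : {poly R}) : {poly R} :=
  \sum_(i < d.+1)
    ((-1) ^+ i * ((m * d) ^ i)%:R * ((m - i)`! * (d - i)`!)%:R
       / ((m`! * d`!)%:R) * acoef d p i) *: 'X^i.

(* Finite rectangular R-transform R^{d,λ}_{Sp}: the truncation modulo s^(d+1)
   of the formal power series  -(s/d) E_p'(s)/E_p(s) = -(s/d) (d/ds) log E_p(s).
   Since E_p(0) = 1 (p monic), 1/E_p = \sum_{k>=0} (1 - E_p)^k as formal power
   series, and modulo s^(d+1) only the terms k <= d matter. *)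
Definition Rtrans (m d : nat) (p : {poly R}) : {poly R} :=
  let E := Epoly m d p in
  let F := - (d%:R)^-1 *: ('X * E^`()) in
  take_poly d.+1 (F * \sum_(k < d.+1) (1 - E) ^+ k).

End RectConv.

(* Main.v *)
Require Import Defs.
From HB Require Import structures.
From mathcomp Require Import all_boot all_order all_algebra.
From mathcomp Require Import ring zify.
Import Order.TTheory GRing.Theory Num.Theory.
Local Open Scope ring_scope.

Set Implicit Arguments.
Unset Strict Implicit.
Section Alg.
Variable R : fieldType.
Implicit Types a b c e E : {poly R}.

Definition cong n a b := exists h : {poly R}, a = b + h * 'X^n.

Lemma cong_refl n a : cong n a a.
Proof. by exists 0; rewrite mul0r addr0. Qed.
Lemma cong_sym n a b : cong n a b -> cong n b a.
Proof. by move=> [h ->]; exists (- h); ring. Qed.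
Lemma cong_trans n a b c : cong n a b -> cong n b c -> cong n a c.
Proof. by move=> [h ->] [k ->]; exists (h + k); ring. Qed.
Lemma ctrans n b a c : cong n a b -> cong n b c -> cong n a c.
Proof. exact: cong_trans. Qed.
Lemma congD n a b c e : cong n a b -> cong n c e -> cong n (a + c) (b + e).
Proof. by move=> [h ->] [k ->]; exists (h + k); ring. Qed.
Lemma congM n a b c e : cong n a b -> cong n c e -> cong n (a * c) (b * e).
Proof. by move=> [h ->] [k ->]; exists (h * e + b * k + h * k * 'X^n); ring. Qed.
Lemma congZ n (x : R) a b : cong n a b -> cong n (x *: a) (x *: b).
Proof. by move=> [h ->]; exists (x *: h); rewrite scalerDr scalerAl. Qed.
Lemma cong_eq n a b : a = b -> cong n a b.
Proof. by move=> ->; apply: cong_refl. Qed.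
Lemma cong_take n a b : cong n a b -> take_poly n a = take_poly n b.
Proof. by move=> [h ->]; rewrite take_polyD take_polyMXn_0 addr0. Qed.
Lemma take_cong n a b : take_poly n a = take_poly n b -> cong n a b.
Proof.
move=> e; exists (drop_poly n a - drop_poly n b).
rewrite -{1}(poly_take_drop n a) -{1}(poly_take_drop n b) e; ring.
Qed.

Lemma cong_deriv n a b : (0 < n)%N -> cong n a b ->
  cong n ('X * a^`()) ('X * b^`()).
Proof.
case: n => // n _ [h ->]; exists ('X * h^`() + h *+ n.+1).
rewrite derivD derivM derivXn succnK exprS -[h *+ _]mulr_natr -['X^n *+ _]mulr_natr.
move: ('X^n) ((n.+1)%:R : {poly R}) => Y N; ring.
Qed.

Lemma geom (x : {poly R}) n : (1 - x) * \sum_(k < n) x ^+ k = 1 - x ^+ n.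
Proof.
elim: n => [|n IH]; first by rewrite big_ord0 mulr0 expr0 subrr.
by rewrite big_ord_recr /= mulrDr IH exprSr; ring.
Qed.

Definition Inv n (E : {poly R}) := \sum_(k < n) (1 - E) ^+ k.

Lemma X_factor (f : {poly R}) : f`_0 = 0 -> f = drop_poly 1 f * 'X.
Proof.
move=> f0; rewrite -{1}(poly_take_drop 1 f).
suff -> : take_poly 1 f = 0 by rewrite add0r expr1.
apply/polyP => i; rewrite coef_take_poly coef0; case: i => //=.
Qed.

Lemma Inv_ok n E : E`_0 = 1 -> cong n (E * Inv n E) 1.
Proof.
move=> E0; have: (1 - E)`_0 = 0 by rewrite coefB coef1 E0 subrr.
move/X_factor => eg.
have -> : E * Inv n E = 1 - (1 - E) ^+ n.
  by rewrite -geom /Inv; congr (_ * _); ring.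
exists (- (drop_poly 1 (1 - E)) ^+ n).
rewrite {1}eg exprMn; ring.
Qed.

Definition Rt n (c : R) (E : {poly R}) := take_poly n ((c *: ('X * E^`())) * Inv n E).

Lemma coef0_cong n a b : (0 < n)%N -> cong n a b -> a`_0 = b`_0.
Proof.
by move=> n0 [h ->]; rewrite coefD coefMXn n0 addr0.
Qed.

Lemma coef0M a b : (a * b)`_0 = a`_0 * b`_0.
Proof. by rewrite coefM big_ord1. Qed.

Lemma Rt_add n (c : R) E1 E2 E3 : (0 < n)%N -> E1`_0 = 1 -> E2`_0 = 1 ->
  cong n E3 (E1 * E2) -> Rt n c E3 = Rt n c E1 + Rt n c E2.
Proof.
move=> n0 h1 h2 h3.
have h30 : E3`_0 = 1 by rewrite (coef0_cong n0 h3) coef0M h1 h2 mulr1.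
have I1 := Inv_ok n h1; have I2 := Inv_ok n h2; have I3 := Inv_ok n h30.
set i1 := Inv n E1 in I1 *; set i2 := Inv n E2 in I2 *; set i3 := Inv n E3 in I3 *.
have c12 : cong n (E3 * (i1 * i2)) 1.
  apply: (@ctrans n (E1 * E2 * (i1 * i2))).
    by apply: congM => //; apply: cong_refl.
  apply: (@ctrans n ((E1 * i1) * (E2 * i2))).
    by apply: cong_eq; ring.
  by rewrite -[1 in X in cong _ _ X](mulr1 1); apply: congM.
have ci : cong n i3 (i1 * i2).
  apply: (@ctrans n (i3 * (E3 * (i1 * i2)))).
    rewrite -{1}[i3]mulr1; apply: congM; [apply: cong_refl| apply: cong_sym].
    exact: c12.
  apply: (@ctrans n ((E3 * i3) * (i1 * i2))).
    by apply: cong_eq; ring.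
  rewrite -{2}[i1 * i2]mul1r; apply: congM => //; apply: cong_refl.
have cd := cong_deriv n0 h3.
rewrite /Rt -take_polyD; apply: cong_take.
apply: (@ctrans n (c *: ('X * (E1 * E2)^`()) * (i1 * i2))).
  by apply: congM => //; apply: congZ.
rewrite derivM.
apply: (@ctrans n (c *: ('X * E1^`()) * i1 * (E2 * i2) +
     c *: ('X * E2^`()) * i2 * (E1 * i1))).
  by apply: cong_eq; rewrite -!scalerAl -scalerDr; congr (_ *: _); ring.
apply: congD.
  rewrite -[X in cong _ _ X]mulr1; apply: congM => //; apply: cong_refl.
rewrite -[X in cong _ _ X]mulr1; apply: congM => //; apply: cong_refl.
Qed.

End Alg.
Unset Implicit Arguments.
Set Strict Implicit.

Section Conc.
Variable R : realFieldType.
Implicit Types p q : {poly R}.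

Lemma fact_neq0 n : ((n`!)%:R : R) != 0.
Proof. by rewrite pnatr_eq0 -lt0n fact_gt0. Qed.

Lemma monic_coef d (r : 'I_d -> R) :
  (\prod_(i < d) ('X - (r i)%:P))`_d = 1.
Proof.
have hs : size (\prod_(i < d) ('X - (r i)%:P)) = d.+1.
  rewrite size_prod_XsubC; congr S; have := card_ord d; by rewrite cardE enumT /= => ->.
have := monic_prod_XsubC (index_enum 'I_d) xpredT r.
by move/monicP; rewrite lead_coefE hs.
Qed.

Definition alpha (m d i : nat) : R :=
  (-1) ^+ i * ((m * d) ^ i)%:R * ((m - i)`! * (d - i)`!)%:R / ((m`! * d`!)%:R).

Lemma EpolyE m d p : Epoly m d p = \poly_(i < d.+1) (alpha m d i * acoef d p i).
Proof. by rewrite poly_def. Qed.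

Lemma coef_Epoly m d p k :
  (Epoly m d p)`_k = if (k < d.+1)%N then alpha m d k * acoef d p k else 0.
Proof. by rewrite EpolyE coef_poly. Qed.

Lemma Epoly0 m d p : (Epoly m d p)`_0 = p`_d.
Proof.
rewrite coef_Epoly /= /alpha /acoef !expr0 !subn0 expn0 !mul1r mulfV ?mul1r //.
by rewrite natrM mulf_neq0 // fact_neq0.
Qed.

Lemma acoef_rconv m d p q k : (k <= d)%N ->
  acoef d (rconv m d p q) k =
  \sum_(i < k.+1) convCoef R m d i (k - i) k * acoef d p i * acoef d q (k - i).
Proof.
move=> kd; rewrite {1}/acoef /rconv coef_sum.
rewrite (bigD1 (Ordinal (kd : (k < d.+1)%N))) //= [X in _ + X]big1 ?addr0.
  rewrite coefMC coefXn eqxx mul1r mulrA -exprMn mulrNN mulr1 expr1n.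
  by rewrite mul1r.
move=> j /eqP hj; rewrite coefMC coefXn.
case: eqP => [e|]; last by rewrite mul0r.
exfalso; apply: hj; apply: val_inj => /=.
have := ltn_ord j; lia.
Qed.

Lemma alpha_mul m d i l : (i + l <= d)%N -> (d <= m)%N ->
  alpha m d (i + l) * convCoef R m d i l (i + l) = alpha m d i * alpha m d l.
Proof.
move=> hd hm; rewrite /alpha /convCoef !natrM !natrX !exprD.
have := fact_neq0 (m - (i + l)); have := fact_neq0 (d - (i + l)).
have := fact_neq0 m; have := fact_neq0 d.
move: ((m - (i + l))`!%:R) ((d - (i + l))`!%:R) (m`!%:R) (d`!%:R) => A B C D.
move=> hD hC hB hA; field.
by rewrite hA hB hC hD.
Qed.

End Conc.

Theorem mainTheorem1 (R : realFieldType) (m d : nat) (p q : {poly R}) :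
  (1 <= d)%N -> (d <= m)%N ->
  (exists r : 'I_d -> R, (forall i, 0 <= r i) /\ p = \prod_(i < d) ('X - (r i)%:P)) ->
  (exists r : 'I_d -> R, (forall i, 0 <= r i) /\ q = \prod_(i < d) ('X - (r i)%:P)) ->
  Rtrans m d (rconv m d p q) = Rtrans m d p + Rtrans m d q.
Proof.
move=> d1 dm [r [_ hp]] [s [_ hq]].
have hP : (Epoly m d p)`_0 = 1 by rewrite Epoly0 hp monic_coef.
have hQ : (Epoly m d q)`_0 = 1 by rewrite Epoly0 hq monic_coef.
have RtE : forall f : {poly R}, Rtrans m d f = Rt d.+1 (-(d%:R)^-1) (Epoly m d f) by [].
rewrite !RtE; apply: Rt_add => //.
apply: take_cong; apply/polyP => k; rewrite !coef_take_poly; case: ifP => // kd.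
rewrite coef_Epoly kd acoef_rconv // coefM mulr_sumr; apply: eq_bigr => [[j hj]] _ /=.
have hj' : (j <= k)%N by [].
have kd' : (k <= d)%N by [].
rewrite !coef_Epoly ifT; last by lia.
rewrite ifT; last by lia.
have [l el] : exists l, k = (j + l)%N by exists (k - j)%N; lia.
subst k; rewrite addKn.
have E := @alpha_mul R m d j l kd' dm.
move: E; move: (alpha R m d (j+l)) (convCoef R m d j l (j+l)) (alpha R m d j) (alpha R m d l).
move: (acoef d p j) (acoef d q l) => a b A C B D E.
transitivity ((A * C) * a * b); first by ring.
by rewrite E; ring.
Qed.
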